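(* Under the smash product $\diamond$ on $C^\bullet$, the subspace $Z^\bullet$ is a subalgebra and $B^\bullet$ is a two-sided ideal of $Z^\bullet$: if $\alpha,\beta\in Z^\bullet$ then $\alpha\diamond\beta\in Z^\bullet$, and if $\alpha\in Z^\bullet$, $\beta\in B^\bullet$ then $\alpha\diamond\beta\in B^\bullet$ and $\beta\diamond\alpha\in B^\bullet$. In particular $Z^\bullet/B^\bullet$ is an algebra subquotient of $S(V)\otimes\bigwedge^\bullet V^*\otimes\mathbb C[G]$ under $\diamond$.
   Context: Let $G$ be a finite group and $V$ a complex vector space of finite dimension $n$ on which $G$ acts linearly; fix a $G$-invariant Hermitian inner product on $V$. For $g\in G$ let $V^g$ be the fixed space of $g$ and $(V^g)^\perp$ its orthogonal complement. $G$ acts on $V^*$ by $({}^g\phi)(v)=\phi({}^{g^{-1}}v)$ and hence on $S(V)$, $\bigwedge V^*$. For a subspace $W\subseteq V$ regard $W^*$ as the functionals in $V^*$ vanishing on $W^\perp$. Let $C^p=S(V)\otimes\bigwedge^pV^*\otimes\mathbb C[G]=\bigoplus_{g\in G}S(V)\otimes\bigwedge^pV^*\otimes g$. Let $Z^p=\bigoplus_{g\in G}S(V)\otimes\big(\bigwedge^{p-\operatorname{codim}V^g}(V^g)^*\wedge\bigwedge^{\operatorname{codim}V^g}((V^g)^\perp)^*\big)\otimes g\subseteq C^p$ and $B^p=\bigoplus_{g\in G}I((V^g)^\perp)\otimes\big(\bigwedge^{p-\operatorname{codim}V^g}(V^g)^*\wedge\bigwedge^{\operatorname{codim}V^g}((V^g)^\perp)^*\big)\otimes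 g$, where $I((V^g)^\perp)$ is the ideal of $S(V)$ generated by $(V^g)^\perp\subseteq V$ and negative exterior powers are $0$. The smash product on $C^\bullet$ (the skew group algebra $(S(V)\otimes\bigwedge^\bullet V^* )\#G$ for the diagonal action) is $(f\otimes\omega\otimes g)\diamond(f'\otimes\omega'\otimes h)=f\,{}^gf'\otimes(\omega\wedge{}^g\omega')\otimes gh$. *)

(* Defs.v *)
From HB Require Import structures.
From mathcomp Require Import all_boot all_order all_algebra all_fingroup all_character.
Set Implicit Arguments.
Unset Strict Implicit.
Unset Printing Implicit Defensive.
Import Order.TTheory GRing.Theory Num.Theory.
Local Open Scope ring_scope.

(* Model:
   - the base field is an arbitrary numClosedFieldType C (covers the complex numbers);
   - V = 'rV[C]_n, with standard basis e_i; V^* = 'rV[C]_n (coordinates in the dual basis),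
     pairing phi(v) = sum_i phi_i v_i;
   - the finite group is the whole finGroupType gT, acting linearly on V on the LEFT by
     ^g v = v *m rG g^-1, where rG is a matrix representation (right action on rows);
   - the G-invariant Hermitian inner product is <u,v> = u H v^*  (H Hermitian pos. def.);
   - S(V) is realised as the algebra of polynomial functions on V^* (generated by the
     linear functions phi |-> phi(v), v in V); an element of S(V) (x) /\V^* is a map
     V^* -> /\V^*_C, and an element of C^. = S(V) (x) /\V^* (x) C[G] is a map
     gT -> V^* -> /\V^*_C;
   - /\V^* has basis eps_I, I : {set 'I_n}, eps_I = eps_{i1} /\ ... /\ eps_{ik}, i1<..<ik. *)

Section Smash.
Variables (C : numClosedFieldType) (n : nat) (gT : finGroupType).
Variable rG : mx_representation C [set: gT]%G n.
Variable H : 'M[C]_n.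

Local Notation V := 'rV[C]_n.

Definition ext := {ffun {set 'I_n} -> C}.
Definition elt := gT -> V -> ext.

Definition pairing (phi v : V) : C := \sum_(i < n) phi 0 i * v 0 i.

(* left action of g on V, and the contragredient action on V^*:
   (actD g phi)(v) = phi(actV g^-1 v) *)
Definition actV (g : gT) (v : V) : V := v *m rG g^-1%g.
Definition actD (g : gT) (phi : V) : V := phi *m (rG g)^T.

Definition inner (u v : V) : C :=
  \sum_(i < n) \sum_(j < n) u 0 i * H i j * (v 0 j)^*.

Definition fixV (g : gT) (v : V) : Prop := actV g v = v.
Definition perp (W : V -> Prop) (v : V) : Prop := forall w, W w -> inner w v = 0.
(* W^* = functionals vanishing on W^perp *)
Definition dualSub (W : V -> Prop) (phi : V) : Prop :=
  forall v, perp W v -> pairing phi v = 0.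
(* codim V^g ; the row space of kermx (rG g - 1) is V^g *)
Definition codim (g : gT) : nat := (n - \rank (kermx (rG g - 1%:M)))%N.

Definition eunit : ext := [ffun I => (I == set0)%:R].
Definition form1 (phi : V) : ext :=
  [ffun I => \sum_(i < n) (I == [set i])%:R * phi 0 i].
Definition wsign (I J : {set 'I_n}) : C :=
  (-1) ^+ #|[set ij : 'I_n * 'I_n | [&& ij.1 \in I, ij.2 \in J & (ij.2 < ij.1)%N]]|.
Definition wedge (a b : ext) : ext :=
  [ffun K => \sum_(I : {set 'I_n}) \sum_(J : {set 'I_n} | (I :&: J == set0) && (I :|: J == K))
      wsign I J * a I * b J].
Definition wedgeL (s : seq V) : ext := foldr (fun phi w => wedge (form1 phi) w) eunit s.
Definition actE (g : gT) (w : ext) : ext :=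
  [ffun K => \sum_(J : {set 'I_n})
      w J * wedgeL [seq actD g (delta_mx 0 j) | j <- enum J] K].

Definition ext_span (P : ext -> Prop) (x : ext) : Prop :=
  exists m (c : 'I_m -> C) (y : 'I_m -> ext),
    (forall i, P (y i)) /\ x = [ffun K => \sum_(i < m) c i * y i K].
Definition extPow (k : nat) (W : V -> Prop) : ext -> Prop :=
  ext_span (fun x => exists s : seq V,
     size s = k /\ (forall phi, phi \in s -> W phi) /\ x = wedgeL s).
Definition wedgeSp (X Y : ext -> Prop) : ext -> Prop :=
  ext_span (fun x => exists a b, X a /\ Y b /\ x = wedge a b).
Definition Xg (g : gT) (p : nat) (x : ext) : Prop :=
  if (codim g <= p)%N then
    wedgeSp (extPow (p - codim g) (dualSub (fixV g)))
            (extPow (codim g) (dualSub (perp (fixV g)))) x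
  else x = 0.

(* S(V) as polynomial functions on V^*, v in V being phi |-> phi(v) *)
Inductive polyS : (V -> C) -> Prop :=
| polyS_const c : polyS (fun _ => c)
| polyS_lin v : polyS (fun phi => pairing phi v)
| polyS_add f h : polyS f -> polyS h -> polyS (fun phi => f phi + h phi)
| polyS_mul f h : polyS f -> polyS h -> polyS (fun phi => f phi * h phi).

Definition idealS (W : V -> Prop) (f : V -> C) : Prop :=
  exists m (h : 'I_m -> V -> C) (w : 'I_m -> V),
    (forall i, polyS (h i)) /\ (forall i, W (w i)) /\
    f = (fun phi => \sum_(i < m) h i phi * pairing phi (w i)).

Definition tensorS (P : (V -> C) -> Prop) (X : ext -> Prop) (a : V -> ext) : Prop :=
  exists m (f : 'I_m -> V -> C) (x : 'I_m -> ext),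
    (forall i, P (f i)) /\ (forall i, X (x i)) /\
    a = (fun phi => [ffun K => \sum_(i < m) f i phi * x i K]).

Definition inZp (p : nat) (a : elt) : Prop :=
  forall g, tensorS polyS (Xg g p) (a g).
Definition inBp (p : nat) (a : elt) : Prop :=
  forall g, tensorS (idealS (perp (fixV g))) (Xg g p) (a g).

(* Z^. = (+)_p Z^p ,  B^. = (+)_p B^p  (C^p = 0 for p > n) *)
Definition inZ (a : elt) : Prop :=
  exists b : 'I_n.+1 -> elt, (forall p : 'I_n.+1, inZp p (b p)) /\
    a = (fun g phi => [ffun K => \sum_(p < n.+1) b p g phi K]).
Definition inB (a : elt) : Prop :=
  exists b : 'I_n.+1 -> elt, (forall p : 'I_n.+1, inBp p (b p)) /\
    a = (fun g phi => [ffun K => \sum_(p < n.+1) b p g phi K]).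

(* smash product: (f (x) w (x) g) <> (f' (x) w' (x) h) = f ^g f' (x) w /\ ^g w' (x) gh *)
Definition smash (a b : elt) : elt :=
  fun k phi => [ffun K => \sum_(g : gT)
     wedge (a g phi) (actE g (b (g^-1 * k)%g (actD g^-1%g phi))) K].

End Smash.

(* Main.v *)
Require Import Defs.
From HB Require Import structures.
From Stdlib Require Import FunctionalExtensionality ClassicalEpsilon Lia.
From mathcomp Require Import all_boot all_order all_algebra all_fingroup all_character.
Set Implicit Arguments. Unset Strict Implicit. Unset Printing Implicit Defensive.
Import Order.TTheory GRing.Theory Num.Theory.
Local Open Scope ring_scope.


HB.instance Definition _ (C : numClosedFieldType) (n : nat) :=
  GRing.Lmodule.copy (ext C n) {ffun {set 'I_n} -> C^o}.

Section Ext.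
Variables (C : numClosedFieldType) (n : nat).
Local Notation V := 'rV[C]_n.
Local Notation ext := (ext C n).
Local Notation wedge := (@wedge C n).
Local Notation form1 := (@form1 C n).
Local Notation wsign := (@wsign C n).

Lemma extZE r (x : ext) K : (r *: x) K = r * x K.
Proof. by rewrite ffunE. Qed.
Lemma extDE (x y : ext) K : (x + y) K = x K + y K.
Proof. by rewrite ffunE. Qed.
Lemma extNE (x : ext) K : (- x) K = - x K.
Proof. by rewrite ffunE. Qed.
Lemma ext0E K : (0 : ext) K = 0.
Proof. by rewrite ffunE. Qed.
Lemma extsumE I (r : seq I) P (F : I -> ext) K : (\sum_(i <- r | P i) F i) K = \sum_(i <- r | P i) F i K.
Proof. exact: sum_ffunE. Qed.

Definition eps (J : {set 'I_n}) : ext := [ffun K => (K == J)%:R].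

Lemma ext_expand (a : ext) : a = \sum_J a J *: eps J.
Proof.
apply/ffunP => K; rewrite sum_ffunE (bigD1 K) //= big1 => [|J /negbTE nJK].
  by rewrite extZE ffunE eqxx addr0 mulr1.
by rewrite extZE ffunE eq_sym nJK mulr0.
Qed.

Lemma wedgeDl (a b c : ext) : wedge (a + b) c = wedge a c + wedge b c.
Proof.
apply/ffunP => K; rewrite !ffunE -big_split; apply: eq_bigr => I _.
rewrite -big_split; apply: eq_bigr => J _; rewrite ffunE.
by rewrite mulrDr mulrDl.
Qed.

Lemma wedgeDr (a b c : ext) : wedge a (b + c) = wedge a b + wedge a c.
Proof.
apply/ffunP => K; rewrite !ffunE -big_split; apply: eq_bigr => I _.
rewrite -big_split; apply: eq_bigr => J _; rewrite ffunE.
by rewrite mulrDr.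
Qed.

Lemma wedgeZl r (a c : ext) : wedge (r *: a) c = r *: wedge a c.
Proof.
apply/ffunP => K; rewrite extZE !ffunE mulr_sumr; apply: eq_bigr => I _.
rewrite mulr_sumr; apply: eq_bigr => J _; rewrite extZE.
by rewrite mulrCA !mulrA.
Qed.

Lemma wedgeZr r (a c : ext) : wedge a (r *: c) = r *: wedge a c.
Proof.
apply/ffunP => K; rewrite extZE !ffunE mulr_sumr; apply: eq_bigr => I _.
rewrite mulr_sumr; apply: eq_bigr => J _; rewrite extZE.
by rewrite mulrCA.
Qed.

Lemma wedge0l (c : ext) : wedge 0 c = 0.
Proof. by have := wedgeZl 0 0 c; rewrite !scale0r. Qed.
Lemma wedge0r (c : ext) : wedge c 0 = 0.
Proof. by have := wedgeZr 0 c 0; rewrite !scale0r. Qed.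
Lemma wedgeNl (a c : ext) : wedge (- a) c = - wedge a c.
Proof. by rewrite -scaleN1r wedgeZl scaleN1r. Qed.
Lemma wedgeNr (a c : ext) : wedge c (- a) = - wedge c a.
Proof. by rewrite -scaleN1r wedgeZr scaleN1r. Qed.

Lemma wedge_suml I (r : seq I) P (F : I -> ext) c :
  wedge (\sum_(i <- r | P i) F i) c = \sum_(i <- r | P i) wedge (F i) c.
Proof.
exact: (big_morph (fun a => wedge a c) (fun x y => wedgeDl x y c) (wedge0l c)).
Qed.
Lemma wedge_sumr I (r : seq I) P (F : I -> ext) c :
  wedge c (\sum_(i <- r | P i) F i) = \sum_(i <- r | P i) wedge c (F i).
Proof.
exact: (big_morph (fun a => wedge c a) (fun x y => wedgeDr c x y) (wedge0r c)).
Qed.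

Lemma wedge_eps I J : wedge (eps I) (eps J) =
  if I :&: J == set0 then wsign I J *: eps (I :|: J) else 0.
Proof.
apply/ffunP => K; rewrite ffunE (bigD1 I) //=.
rewrite [X in _ + X]big1 ?addr0 => [|I' nI']; last first.
  by rewrite big1 // => J' _; rewrite [eps I I']ffunE (negbTE nI') mulr0 mul0r.
rewrite big_mkcond (bigD1 J) //= big1 ?addr0 => [|J' nJ']; last first.
  by case: ifP => // _; rewrite [eps J J']ffunE (negbTE nJ') mulr0.
rewrite ![eps _ _]ffunE !eqxx !mulr1.
case: (I :&: J == set0) => /=; last by rewrite ffunE.
by rewrite extZE ffunE [K == _]eq_sym; case: (_ == _); rewrite ?mulr1 ?mulr0.
Qed.

Definition pairs (I J : {set 'I_n}) :=
  [set ij : 'I_n * 'I_n | [&& ij.1 \in I, ij.2 \in J & (ij.2 < ij.1)%N]].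
Lemma wsignE I J : wsign I J = (-1) ^+ #|pairs I J|.
Proof. by []. Qed.

Lemma wsignUl I J M : I :&: J == set0 ->
  wsign (I :|: J) M = wsign I M * wsign J M.
Proof.
move=> /eqP dIJ; rewrite !wsignE -exprD; congr (_ ^+ _).
have -> : pairs (I :|: J) M = pairs I M :|: pairs J M.
  by apply/setP => -[x y]; rewrite !inE /= andb_orl.
rewrite cardsU (_ : pairs I M :&: pairs J M = set0) ?cards0 ?subn0 //.
apply/setP => -[x y]; rewrite !inE /=; apply/negP => /andP[/and3P[xI _ _] /and3P[xJ _ _]].
by move: (in_set0 x); rewrite -dIJ inE xI xJ.
Qed.

Lemma wsignUr I J M : J :&: M == set0 ->
  wsign I (J :|: M) = wsign I J * wsign I M.
Proof.
move=> /eqP dJM; rewrite !wsignE -exprD; congr (_ ^+ _).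
have -> : pairs I (J :|: M) = pairs I J :|: pairs I M.
  by apply/setP => -[x y]; rewrite !inE /= andb_orl andb_orr.
rewrite cardsU (_ : pairs I J :&: pairs I M = set0) ?cards0 ?subn0 //.
apply/setP => -[x y]; rewrite !inE /=; apply/negP => /andP[/and3P[_ yJ _] /and3P[_ yM _]].
by move: (in_set0 y); rewrite -dJM inE yJ yM.
Qed.

Lemma wsign0l J : wsign set0 J = 1.
Proof.
rewrite wsignE (_ : pairs _ _ = set0) ?cards0 ?expr0 //.
by apply/setP => -[x y]; rewrite !inE.
Qed.

Lemma wedge_eps_assoc I J M :
  wedge (wedge (eps I) (eps J)) (eps M) = wedge (eps I) (wedge (eps J) (eps M)).
Proof.
rewrite !wedge_eps.
case dIJ: (I :&: J == set0); case dJM: (J :&: M == set0);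
  rewrite ?wedge0l ?wedge0r ?wedgeZl ?wedgeZr ?wedge_eps ?setIUl ?setIUr ?setU_eq0 ?dIJ ?dJM //=.
all: case dIM: (I :&: M == set0); rewrite ?andbF ?scaler0 //.
by rewrite !scalerA wsignUl // wsignUr // setUA mulrA [in RHS]mulrC.
Qed.

Lemma wedge_assoc a b c : wedge (wedge a b) c = wedge a (wedge b c).
Proof.
rewrite {1}(ext_expand a) {2}(ext_expand a) !wedge_suml; apply: eq_bigr => I _.
rewrite !wedgeZl; congr (_ *: _).
rewrite (ext_expand b) wedge_sumr !wedge_suml wedge_sumr.
apply: eq_bigr => J _.
rewrite wedgeZr !wedgeZl wedgeZr; congr (_ *: _).
rewrite (ext_expand c) !wedge_sumr; apply: eq_bigr => M _.
by rewrite !wedgeZr wedge_eps_assoc.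
Qed.

Lemma card_pairs11 (i j : 'I_n) : #|pairs [set i] [set j]| = (j < i)%N.
Proof.
have -> : pairs [set i] [set j] = if (j < i)%N then [set (i, j)] else set0.
  apply/setP => -[x y]; rewrite !inE /=.
  case: ifP => h; rewrite ?inE ?xpair_eqE.
    by case: eqP => [->|] //=; case: eqP => [->|] //=; rewrite h andbT.
  by case: eqP => [->|] //=; case: eqP => [->|] //=; rewrite h.
by case: ifP; rewrite ?cards1 ?cards0.
Qed.

Lemma wedge_eps11 (i j : 'I_n) : wedge (eps [set i]) (eps [set j]) =
  - wedge (eps [set j]) (eps [set i]).
Proof.
rewrite !wedge_eps; case: (eqVneq i j) => [->|nij].
  rewrite setIid.
  have -> : ([set j] == set0) = false by apply/negbTE/set0Pn; exists j; rewrite inE.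
  by rewrite oppr0.
have d : [set i] :&: [set j] == set0.
  apply/eqP/setP => k; rewrite !inE; apply/negP => /andP[/eqP-> /eqP]; exact/eqP.
rewrite d setIC d setUC -scaleNr; congr (_ *: _).
rewrite !wsignE !card_pairs11.
case: (ltngtP i j) => [h|h|/val_inj h]; last by rewrite h eqxx in nij.
  by rewrite expr0 expr1 opprK.
by rewrite expr0 expr1.
Qed.

Lemma form1_expand (a : V) : form1 a = \sum_i a 0 i *: eps [set i].
Proof.
apply/ffunP => K; rewrite ffunE extsumE; apply: eq_bigr => i _.
by rewrite extZE ffunE mulrC.
Qed.

Lemma form1D (a b : V) : form1 (a + b) = form1 a + form1 b.
Proof.
apply/ffunP => K; rewrite !ffunE -big_split; apply: eq_bigr => i _.
by rewrite mxE mulrDr.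
Qed.

Lemma form1Z r (a : V) : form1 (r *: a) = r *: form1 a.
Proof.
apply/ffunP => K; rewrite extZE !ffunE mulr_sumr; apply: eq_bigr => i _.
by rewrite mxE mulrCA.
Qed.

Lemma form1N (a : V) : form1 (- a) = - form1 a.
Proof. by rewrite -scaleN1r form1Z scaleN1r. Qed.
Lemma form1B (a b : V) : form1 (a - b) = form1 a - form1 b.
Proof. by rewrite form1D form1N. Qed.
Lemma form10 : form1 0 = 0.
Proof. by have := form1Z 0 0; rewrite !scale0r. Qed.

Lemma wedge_sum2 I J (r : seq I) (r' : seq J) (F : I -> ext) (G : J -> ext) :
  wedge (\sum_(i <- r) F i) (\sum_(j <- r') G j) = \sum_(i <- r) \sum_(j <- r') wedge (F i) (G j).
Proof. by rewrite wedge_suml; apply: eq_bigr => i _; rewrite wedge_sumr. Qed.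

Lemma wedge_form1C (a b : V) : wedge (form1 a) (form1 b) = - wedge (form1 b) (form1 a).
Proof.
rewrite !form1_expand !wedge_sum2 [in RHS]exchange_big -sumrN; apply: eq_bigr => i _.
rewrite -sumrN; apply: eq_bigr => j _.
by rewrite !wedgeZl !wedgeZr wedge_eps11 !scalerN !scalerA mulrC.
Qed.

Lemma wedge_form1_id (a : V) : wedge (form1 a) (form1 a) = 0.
Proof.
have h := wedge_form1C a a; move: h; set x := wedge _ _ => h.
have : (2%:R : C) *: x = 0 by rewrite scaler_nat mulr2n {1}h addNr.
by move/eqP; rewrite scaler_eq0 pnatr_eq0 /= => /eqP.
Qed.

Lemma eunitE : eunit C n = eps set0.
Proof. by apply/ffunP => K; rewrite !ffunE. Qed.

Lemma wedge1l a : wedge (eunit C n) a = a.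
Proof.
rewrite eunitE {1}(ext_expand a) wedge_sumr {2}(ext_expand a); apply: eq_bigr => J _.
by rewrite wedgeZr wedge_eps set0I eqxx wsign0l scale1r set0U.
Qed.

Lemma wedge1r a : wedge a (eunit C n) = a.
Proof.
rewrite eunitE {1}(ext_expand a) wedge_suml {2}(ext_expand a); apply: eq_bigr => J _.
rewrite wedgeZl wedge_eps setI0 eqxx setU0.
rewrite wsignE (_ : pairs _ _ = set0) ?cards0 ?expr0 ?scale1r //.
by apply/setP => -[x y]; rewrite !inE andbF.
Qed.

Local Notation wedgeL := (@wedgeL C n).

Lemma wedgeL_cons a s : wedgeL (a :: s) = wedge (form1 a) (wedgeL s).
Proof. by []. Qed.

Lemma wedgeL_nil : wedgeL [::] = eunit C n.
Proof. by []. Qed.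

Lemma wedgeL_cat s t : wedgeL (s ++ t) = wedge (wedgeL s) (wedgeL t).
Proof.
elim: s => [|a s IH]; first by rewrite wedgeL_nil wedge1l.
by rewrite cat_cons !wedgeL_cons IH wedge_assoc.
Qed.

Lemma wedgeL_move s a w : wedge (wedgeL s) (wedge (form1 a) w) =
  (-1) ^+ size s *: wedge (form1 a) (wedge (wedgeL s) w).
Proof.
elim: s => [|b s IH]; first by rewrite wedgeL_nil !wedge1l expr0 scale1r.
rewrite wedgeL_cons !wedge_assoc IH wedgeZr -wedge_assoc wedge_form1C wedgeNl.
by rewrite wedge_assoc exprS mulN1r scaleNr scalerN.
Qed.

Lemma wedgeL_swap s t : wedge (wedgeL s) (wedgeL t) =
  (-1) ^+ (size s * size t) *: wedge (wedgeL t) (wedgeL s).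
Proof.
elim: t => [|b t IH]; first by rewrite wedgeL_nil wedge1l wedge1r muln0 expr0 scale1r.
rewrite wedgeL_cons wedgeL_move IH wedgeZr -wedge_assoc scalerA -exprD /=.
by rewrite mulnS.
Qed.

Definition spanM (s : seq V) : 'M[C]_n := (\sum_(v <- s) <<v>>)%MS.

Lemma spanM_cons a s : spanM (a :: s) = (<<a>> + spanM s)%MS.
Proof. by rewrite /spanM big_cons. Qed.
Lemma spanM_nil : spanM [::] = 0.
Proof. by rewrite /spanM big_nil. Qed.
Lemma spanM_cat s t : spanM (s ++ t) = (spanM s + spanM t)%MS.
Proof. by rewrite /spanM big_cat. Qed.

Lemma mem_spanM a s : a \in s -> (a <= spanM s)%MS.
Proof.
elim: s => [//|b s IH]; rewrite in_cons spanM_cons => /orP[/eqP->|/IH h].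
  by apply: submx_trans (addsmxSl _ _); rewrite genmxE.
exact: submx_trans h (addsmxSr _ _).
Qed.

Lemma rank_spanM s : (\rank (spanM s) <= size s)%N.
Proof.
elim: s => [|b s IH]; first by rewrite spanM_nil mxrank0.
rewrite spanM_cons; apply: leq_trans (mxrank_adds_leqif _ _) _.
by rewrite genmxE /= -(add1n (size s)) leq_add // rank_leq_row.
Qed.

Lemma wedge_form1_span a t : (a <= spanM t)%MS -> wedge (form1 a) (wedgeL t) = 0.
Proof.
elim: t a => [|b t IH] a.
  by rewrite spanM_nil submx0 => /eqP->; rewrite form10 wedge0l.
rewrite spanM_cons => /sub_addsmxP[[u1 u2] /= ->].
have : (u1 *m <<b>> <= b)%MS by rewrite -(genmxE b) submxMl.
case/sub_rVP => c ->; rewrite form1D form1Z wedgeDl wedgeZl.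
rewrite -wedge_assoc wedge_form1_id wedge0l scaler0 add0r.
rewrite -wedge_assoc wedge_form1C wedgeNl wedge_assoc IH ?wedge0r ?oppr0 //.
exact: submxMl.
Qed.

Lemma wedgeL_dep s : (\rank (spanM s) < size s)%N -> wedgeL s = 0.
Proof.
elim: s => [//|b s IH] /=; rewrite spanM_cons => hr.
case: (boolP (b <= spanM s)%MS) => hb; first by rewrite wedge_form1_span.
rewrite IH ?wedge0r //.
have h := mxrank_leqif_sup (addsmxSr <<b>>%MS (spanM s)).
have : (\rank (spanM s) < \rank (<<b>> + spanM s))%N.
  rewrite (ltn_leqif h); apply: contra hb => h2.
  by apply: submx_trans h2; apply: submx_trans (addsmxSl _ _); rewrite genmxE.
by move=> h3; apply: leq_trans h3 _.
Qed.

Lemma wedgeL_repl (f : V -> V) u L :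
  (forall a, a \in u -> (f a - a <= spanM L)%MS) ->
  wedgeL (map f u ++ L) = wedgeL (u ++ L).
Proof.
elim: u => [//|a u IH] h /=; rewrite IH; last first.
  by move=> x xu; apply: h; rewrite in_cons xu orbT.
have -> : f a = a + (f a - a) by rewrite addrC subrK.
rewrite form1D wedgeDl (@wedge_form1_span (f a - a)) ?addr0 //.
rewrite spanM_cat; apply: submx_trans (addsmxSr _ _).
by apply: h; rewrite in_cons eqxx.
Qed.

End Ext.


Section ActE.
Variables (C : numClosedFieldType) (n : nat) (gT : finGroupType).
Variable rG : mx_representation C [set: gT]%G n.
Local Notation V := 'rV[C]_n.
Local Notation ext := (ext C n).
Local Notation wedge := (@wedge C n).
Local Notation form1 := (@form1 C n).
Local Notation wsign := (@wsign C n).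
Local Notation wedgeL := (@wedgeL C n).
Local Notation actE := (actE rG).
Local Notation actD := (actD rG).
Local Notation eps := (@eps C n).
Local Notation spanM := (@spanM C n).

Definition fe (g : gT) (j : 'I_n) : V := actD g (delta_mx 0 j).

Lemma actED g a b : actE g (a + b) = actE g a + actE g b.
Proof.
apply/ffunP => K; rewrite extDE !ffunE -big_split; apply: eq_bigr => J _.
by rewrite extDE mulrDl.
Qed.

Lemma actEZ g r a : actE g (r *: a) = r *: actE g a.
Proof.
apply/ffunP => K; rewrite extZE !ffunE mulr_sumr; apply: eq_bigr => J _.
by rewrite extZE mulrA.
Qed.

Lemma actE0 g : actE g 0 = 0.
Proof. by have := actEZ g 0 0; rewrite !scale0r. Qed.

Lemma actE_sum g I (r : seq I) P (F : I -> ext) :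
  actE g (\sum_(i <- r | P i) F i) = \sum_(i <- r | P i) actE g (F i).
Proof. exact: (big_morph (actE g) (actED g) (actE0 g)). Qed.

Lemma actE_eps g J : actE g (eps J) = wedgeL (map (fe g) (enum J)).
Proof.
apply/ffunP => K; rewrite ffunE (bigD1 J) //= big1 => [|J' nJ'].
  by rewrite ffunE eqxx mul1r addr0.
by rewrite ffunE (negbTE nJ') mul0r.
Qed.

Lemma actDD g (a b : V) : actD g (a + b) = actD g a + actD g b.
Proof. by rewrite /actD mulmxDl. Qed.
Lemma actDZ g r (a : V) : actD g (r *: a) = r *: actD g a.
Proof. by rewrite /actD scalemxAl. Qed.
Lemma actD0 g : actD g 0 = 0.
Proof. by rewrite /actD mul0mx. Qed.
Lemma actD_sum g I (r : seq I) P (F : I -> V) :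
  actD g (\sum_(i <- r | P i) F i) = \sum_(i <- r | P i) actD g (F i).
Proof. exact: (big_morph (actD g) (actDD g) (actD0 g)). Qed.

Lemma form10' : form1 0 = 0.
Proof. exact: form10. Qed.
Lemma form1_sum I (r : seq I) P (F : I -> V) :
  form1 (\sum_(i <- r | P i) F i) = \sum_(i <- r | P i) form1 (F i).
Proof. exact: (big_morph form1 (@form1D C n) form10'). Qed.

Lemma form1_delta (i : 'I_n) : form1 (delta_mx 0 i) = eps [set i].
Proof.
rewrite form1_expand (bigD1 i) //= big1 => [|j nji].
  by rewrite mxE !eqxx scale1r addr0.
by rewrite mxE eqxx (negbTE nji) scale0r.
Qed.

Lemma wedgeL_insert (f : 'I_n -> V) (P : pred 'I_n) i e :
  sorted (fun x y : 'I_n => (x < y)%N) e -> i \in e -> ~~ P i ->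
  wedgeL (map f (filter (fun x => (x == i) || P x) e)) =
  (-1) ^+ count (fun j => P j && (j < i)%N) e *:
    wedge (form1 (f i)) (wedgeL (map f (filter P e))).
Proof.
elim: e => [//|x e IH] srt; rewrite in_cons => ie nPi.
have se : sorted (fun x y : 'I_n => (x < y)%N) e by apply: path_sorted srt.
have ax : all (fun y : 'I_n => (x < y)%N) e.
  by apply: order_path_min srt => a b c; apply: ltn_trans.
case: (eqVneq i x) => [eix|nix].
  subst x; rewrite /= eqxx /= (negbTE nPi) /= add0n.
  rewrite (eq_in_filter (a1 := fun x => (x == i) || P x) (a2 := P)); last first.
    move=> y ye; have := allP ax y ye; case: (eqVneq y i) => [->|//]; by rewrite ltnn.
  rewrite (eq_in_count (a1 := fun j => P j && (j < i)%N) (a2 := pred0)); last first.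
    move=> y ye; have := allP ax y ye => h; apply/negbTE; rewrite negb_and.
    by rewrite -leqNgt ltnW ?orbT.
  by rewrite count_pred0 expr0 scale1r.
rewrite /= eq_sym (negbTE nix) /=; have ie' : i \in e by move: ie; rewrite (negbTE nix).
have xi : (x < i)%N by apply: (allP ax).
case Px: (P x) => /=.
  rewrite IH // wedgeZr -wedge_assoc wedge_form1C wedgeNl wedge_assoc.
  by rewrite xi /= exprS mulN1r scaleNr scalerN.
by rewrite IH // add0n.
Qed.

Lemma enumU1 (i : 'I_n) (J : {set 'I_n}) :
  enum (i |: J) = filter (fun x => (x == i) || (x \in J)) (enum 'I_n).
Proof.
rewrite {1}/enum_mem -enumT; apply: eq_filter => x; by rewrite !inE.
Qed.

Lemma enumS (J : {set 'I_n}) : enum J = filter (fun x => x \in J) (enum 'I_n).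
Proof. by rewrite {1}/enum_mem -enumT. Qed.

Lemma sorted_enum_ord : sorted (fun x y : 'I_n => (x < y)%N) (enum 'I_n).
Proof.
have := iota_ltn_sorted 0 n; rewrite -val_enum_ord sorted_map; by [].
Qed.

Lemma card_pairs1 (i : 'I_n) J :
  #|pairs [set i] J| = count (fun j => (j \in J) && (j < i)%N) (enum 'I_n).
Proof.
have -> : pairs [set i] J = [set (i, j) | j in [set j | (j \in J) && (j < i)%N]].
  apply/setP => -[x y]; rewrite !inE /=; apply/idP/imsetP.
    by case/and3P => /eqP-> yJ yi; exists y; rewrite // inE yJ.
  by case=> j; rewrite inE => /andP[jJ ji] [-> ->]; rewrite eqxx jJ ji.
rewrite card_imset; last by move=> a b [].
by rewrite cardsE cardE -size_filter; congr size; rewrite {1}/enum_mem -enumT.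
Qed.

Lemma actE_eps_wedge g (i : 'I_n) J :
  actE g (wedge (eps [set i]) (eps J)) = wedge (form1 (fe g i)) (actE g (eps J)).
Proof.
rewrite wedge_eps !actE_eps.
case: (boolP ([set i] :&: J == set0)) => d; last first.
  rewrite actE0 wedge_form1_span //; apply: mem_spanM; apply: map_f.
  rewrite mem_enum; apply: contraR d => niJ; apply/eqP/setP => x.
  by rewrite !inE; apply/negP => /andP[/eqP-> iJ]; rewrite iJ in niJ.
have niJ : i \notin J.
  by apply/negP => iJ; move/eqP/setP: d => /(_ i); rewrite !inE eqxx iJ.
rewrite actEZ actE_eps enumU1 (@wedgeL_insert (fe g) (fun x => x \in J)) //.
- by rewrite -enumS scalerA wsignE card_pairs1 -exprD addnn -mul2n exprM sqrrN expr1n expr1n scale1r.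
- exact: sorted_enum_ord.
- by rewrite mem_enum.
Qed.

Lemma actE_form1_wedge g (a : V) w :
  actE g (wedge (form1 a) w) = wedge (form1 (actD g a)) (actE g w).
Proof.
rewrite {1}(row_sum_delta a) {2}(row_sum_delta a) actD_sum !form1_sum.
rewrite wedge_suml actE_sum wedge_suml; apply: eq_bigr => i _.
rewrite actDZ !form1Z !wedgeZl actEZ; congr (_ *: _).
rewrite (ext_expand w) wedge_sumr actE_sum actE_sum wedge_sumr; apply: eq_bigr => J _.
by rewrite wedgeZr !actEZ wedgeZr form1_delta actE_eps_wedge.
Qed.

Lemma actE_eunit g : actE g (eunit C n) = eunit C n.
Proof.
rewrite eunitE actE_eps (_ : enum set0 = [::]) //.
by apply: size0nil; rewrite -cardE cards0.
Qed.

Lemma actE_wedgeL g s : actE g (wedgeL s) = wedgeL (map (actD g) s).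
Proof.
elim: s => [|a s IH]; first exact: actE_eunit.
by rewrite /= actE_form1_wedge IH.
Qed.

End ActE.


Section LA.
Variables (C : numClosedFieldType) (n : nat) (gT : finGroupType).
Variable rG : mx_representation C [set: gT]%G n.
Variable H : 'M[C]_n.
Hypothesis H_herm : forall i j, H j i = (H i j)^*.
Hypothesis H_posdef : forall v : 'rV[C]_n, v != 0 -> 0 < inner H v v.
Hypothesis H_inv : forall (g : gT) (u v : 'rV[C]_n),
        inner H (actV rG g u) (actV rG g v) = inner H u v.
Local Notation V := 'rV[C]_n.
Local Notation actV := (actV rG).
Local Notation actD := (actD rG).
Local Notation inner := (inner H).
Local Notation fixV := (fixV rG).
Local Notation perp := (perp H).
Local Notation codim := (codim rG).
Local Notation pairing := (@pairing C n).

Lemma inG (x : gT) : x \in [set: gT]%G.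
Proof. by rewrite inE. Qed.

Lemma rGM x y : rG (x * y)%g = rG x *m rG y.
Proof. by rewrite repr_mxM ?inG. Qed.

Lemma actVM x y v : actV (x * y)%g v = actV x (actV y v).
Proof. by rewrite /actV invMg rGM mulmxA. Qed.

Lemma actV1 v : actV 1%g v = v.
Proof. by rewrite /actV invg1 repr_mx1 mulmx1. Qed.

Lemma actVK x v : actV x^-1 (actV x v) = v.
Proof. by rewrite -actVM mulVg actV1. Qed.
Lemma actKV x v : actV x (actV x^-1 v) = v.
Proof. by rewrite -actVM mulgV actV1. Qed.

Lemma actVD x u v : actV x (u + v) = actV x u + actV x v.
Proof. by rewrite /actV mulmxDl. Qed.
Lemma actVN x v : actV x (- v) = - actV x v.
Proof. by rewrite /actV mulNmx. Qed.
Lemma actVB x u v : actV x (u - v) = actV x u - actV x v.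
Proof. by rewrite actVD actVN. Qed.

Definition Kx (x : gT) : 'M[C]_n := kermx (rG x - 1%:M).

Lemma fixV_K x v : fixV x v <-> (v <= Kx x)%MS.
Proof.
rewrite /Kx sub_kermx mulmxBr mulmx1 subr_eq0 /fixV /actV.
split => [h|/eqP h]; apply/eqP.
  by rewrite -{1}h -mulmxA -rGM mulVg repr_mx1 mulmx1.
by rewrite -{1}h -mulmxA -rGM mulgV repr_mx1 mulmx1.
Qed.

Lemma fixVK_inv x v : fixV x v -> fixV x^-1 v.
Proof. by rewrite /fixV => h; rewrite -{1}h actVK. Qed.

Lemma pairingE (phi v : V) : pairing phi v = (phi *m v^T) 0 0.
Proof. by rewrite /pairing mxE; apply: eq_bigr => i _; rewrite mxE. Qed.

Lemma pairingC (phi v : V) : pairing phi v = (v *m phi^T) 0 0.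
Proof. by rewrite pairingE -[phi *m v^T]trmxK trmx_mul trmxK mxE. Qed.

Lemma pairing_actD g (phi v : V) : pairing (actD g phi) v = pairing phi (actV g^-1 v).
Proof.
by rewrite !pairingE /actD /actV invgK trmx_mul -!mulmxA.
Qed.

Lemma pairingDr (phi u v : V) : pairing phi (u + v) = pairing phi u + pairing phi v.
Proof. by rewrite !pairingE linearD /= mulmxDr mxE. Qed.

Lemma innerE (u v : V) : inner u v = (u *m (H *m (map_mx Num.conj v)^T)) 0 0.
Proof.
rewrite /inner mxE /=; apply: eq_bigr => i _.
rewrite !mxE mulr_sumr; apply: eq_bigr => j _.
by rewrite !mxE mulrA.
Qed.

Lemma innerDl (u u' v : V) : inner (u + u') v = inner u v + inner u' v.
Proof. by rewrite !innerE mulmxDl mxE. Qed.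

Lemma innerBr (u v v' : V) : inner u (v - v') = inner u v - inner u v'.
Proof.
rewrite /inner -sumrB; apply: eq_bigr => i _; rewrite -sumrB; apply: eq_bigr => j _.
by rewrite !mxE rmorphB mulrBr.
Qed.

Lemma inner_herm (u v : V) : inner v u = (inner u v)^*.
Proof.
rewrite /inner rmorph_sum exchange_big; apply: eq_bigr => i _.
rewrite rmorph_sum; apply: eq_bigr => j _.
by rewrite !rmorphM /= conjCK H_herm [RHS]mulrC [(u 0 i)^* * _]mulrC mulrA.
Qed.

Lemma inner_eq0 (v : V) : inner v v = 0 -> v = 0.
Proof.
move=> h; apply/eqP; apply: contraT => nz.
by have := H_posdef nz; rewrite h ltxx.
Qed.

Lemma mulmx_col0 m (A : 'M[C]_(m, n)) (c : 'cV[C]_n) :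
  A *m c = 0 <-> (forall w : V, (w <= A)%MS -> (w *m c) 0 0 = 0).
Proof.
split=> [h w /submxP[x ->]|h].
  by rewrite -mulmxA h mulmx0 mxE.
apply/matrixP => i j; rewrite ord1.
have := h (row i A) (row_sub i A); rewrite -row_mul mxE => ->.
by rewrite mxE.
Qed.

Definition annM m (A : 'M[C]_(m, n)) : 'M[C]_n := kermx A^T.

Lemma annMP m (A : 'M[C]_(m, n)) (phi : V) :
  (phi <= annM A)%MS <-> (forall v, (v <= A)%MS -> pairing phi v = 0).
Proof.
rewrite /annM sub_kermx -trmx0 -(trmxK (phi *m A^T)) trmx_mul trmxK.
rewrite (inj_eq (@trmx_inj _ _ _)).
split=> [/eqP /mulmx_col0 h v vA|h]; first by rewrite pairingC; apply: h.
by apply/eqP/mulmx_col0 => w wA; rewrite -pairingC; apply: h.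
Qed.

Lemma rank_annM m (A : 'M[C]_(m, n)) : \rank (annM A) = (n - \rank A)%N.
Proof. by rewrite /annM mxrank_ker mxrank_tr. Qed.

Definition conjmx m (A : 'M[C]_(m, n)) : 'M[C]_(m, n) := map_mx Num.conj A.

Definition perpM m (A : 'M[C]_(m, n)) : 'M[C]_n :=
  map_mx Num.conj (kermx (A *m H)^T).

Lemma conjmxK m (v : 'M[C]_(m, n)) : map_mx Num.conj (map_mx Num.conj v) = v.
Proof. by apply/matrixP => i j; rewrite !mxE conjCK. Qed.

Lemma perpMP m (A : 'M[C]_(m, n)) (v : V) :
  (v <= perpM A)%MS <-> (forall w, (w <= A)%MS -> inner w v = 0).
Proof.
rewrite -{1}(conjmxK v) /perpM map_submx sub_kermx.
rewrite -trmx0 -(trmxK (_ *m (A *m H)^T)) trmx_mul trmxK (inj_eq (@trmx_inj _ _ _)).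
rewrite -mulmxA.
split=> [/eqP /mulmx_col0 h w wA|h]; first by rewrite innerE; apply: h.
by apply/eqP/mulmx_col0 => w wA; rewrite -innerE; apply: h.
Qed.

Lemma mx_eq0_sub m (M : 'M[C]_(m, n)) : (forall v : V, (v <= M)%MS -> v = 0) -> M = 0.
Proof.
move=> h; apply/eqP; apply: contraT => nz.
have := h _ (nz_row_sub M); move/eqP; rewrite nz_row_eq0 => /eqP Mz.
by rewrite Mz eqxx in nz.
Qed.

Lemma H_free : row_free H.
Proof.
rewrite /row_free eqn_leq rank_leq_row /=.
have : kermx H = 0.
  apply: mx_eq0_sub => v; rewrite sub_kermx => /eqP vH.
  by apply: inner_eq0; rewrite innerE mulmxA vH mul0mx mxE.
by move/eqP; rewrite -mxrank_eq0 mxrank_ker subn_eq0.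

Qed.

Lemma rank_perpM m (A : 'M[C]_(m, n)) : \rank (perpM A) = (n - \rank A)%N.
Proof.
by rewrite /perpM mxrank_map mxrank_ker mxrank_tr mxrankMfree // H_free.
Qed.

Lemma codimE x : codim x = \rank (rG x - 1%:M).
Proof. by rewrite /Defs.codim mxrank_ker subKn // rank_leq_row. Qed.

Lemma rank_Kx x : \rank (Kx x) = (n - codim x)%N.
Proof. by rewrite /Kx mxrank_ker codimE. Qed.

Lemma codim_le n0 : (codim n0 <= n)%N.
Proof. by rewrite codimE rank_leq_row. Qed.

Lemma codim_conj_le g h : (codim (g * h * g^-1)%g <= codim h)%N.
Proof.
rewrite !codimE.
have -> : rG (g * h * g^-1)%g - 1%:M = rG g *m (rG h - 1%:M) *m rG g^-1%g.
  by rewrite mulmxBr mulmx1 mulmxBl -!rGM mulgV repr_mx1.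
by apply: leq_trans (mxrankM_maxl _ _) _; apply: mxrankM_maxr.
Qed.

Lemma codim_conj g h : codim (g * h * g^-1)%g = codim h.
Proof.
apply/eqP; rewrite eqn_leq codim_conj_le /=.
have := codim_conj_le g^-1 (g * h * g^-1)%g.
have -> : (g^-1 * (g * h * g^-1) * g^-1^-1 = h)%g by rewrite invgK !mulgA mulVg mul1g -mulgA mulVg mulg1.
by [].
Qed.

Lemma spanM_sub (s : seq V) m (M : 'M[C]_(m, n)) :
  (forall a, a \in s -> (a <= M)%MS) -> (spanM s <= M)%MS.
Proof.
elim: s => [_|b s IH h]; first by rewrite spanM_nil sub0mx.
rewrite spanM_cons addsmx_sub genmxE h ?mem_head //= IH // => a ain.
by apply: h; rewrite in_cons ain orbT.
Qed.

Lemma nat3 a b p q x : (p <= a)%N -> (q <= b)%N -> (a + b + x = p + q)%N ->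
  [/\ x = 0, p = a & q = b]%N.
Proof. move=> /ssrnat.leP h1 /ssrnat.leP h2; rewrite -!plusE => h3. split; lia. Qed.

Local Notation D1 x := (dualSub H (fixV x)).
Local Notation D2 x := (dualSub H (perp (fixV x))).

Lemma perp_perp_fix W v : W v -> perp (perp W) v.
Proof.
move=> Wv w pw; rewrite inner_herm pw //.
by rewrite rmorph0.
Qed.

Lemma D2_ann x phi : D2 x phi -> (phi <= annM (Kx x))%MS.
Proof.
move=> h; apply/annMP => v /fixV_K fv; apply: h; exact: perp_perp_fix.
Qed.

Lemma fix_conj g h v : fixV (g * h * g^-1)%g v -> fixV h (actV g^-1 v).
Proof.
move=> fv; rewrite /Defs.fixV -actVM.
have -> : (h * g^-1 = g^-1 * (g * h * g^-1))%g by rewrite !mulgA mulVg mul1g.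
by rewrite actVM fv.
Qed.

Lemma actD_ann g h phi : D2 h phi -> (actD g phi <= annM (Kx (g * h * g^-1)%g))%MS.
Proof.
move=> /D2_ann /annMP hp; apply/annMP => v /fixV_K fv.
rewrite pairing_actD; apply: hp; apply/fixV_K; exact: fix_conj.
Qed.

Lemma sub_vec m1 m2 (A : 'M[C]_(m1, n)) (B : 'M[C]_(m2, n)) :
  (forall v : V, (v <= A)%MS -> (v <= B)%MS) -> (A <= B)%MS.
Proof. by move=> h; apply/row_subP => i; apply: h; exact: row_sub. Qed.

Lemma annM_anti m1 m2 (A : 'M[C]_(m1, n)) (B : 'M[C]_(m2, n)) :
  (forall v : V, (v <= A)%MS -> (v <= B)%MS) -> (annM B <= annM A)%MS.
Proof.
move=> h; apply: sub_vec => phi /annMP hp; apply/annMP => v vA; apply: hp; exact: h.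
Qed.

Lemma pairing0 (v : V) : pairing 0 v = 0.
Proof. by rewrite pairingE mul0mx mxE. Qed.

Section Main.
Variables (g h : gT) (s2 t2 : seq V).
Hypotheses (sz2 : size s2 = codim g) (szt : size t2 = codim h).
Hypothesis hs2 : forall a, a \in s2 -> D2 g a.
Hypothesis ht2 : forall a, a \in t2 -> D2 h a.
Let t2' := map (actD g) t2.
Let k' := (g * h * g^-1)%g.
Hypothesis hrk : \rank (spanM (s2 ++ t2')) = size (s2 ++ t2').

Let hS2 : (spanM s2 <= annM (Kx g))%MS.
Proof. by apply: spanM_sub => a /hs2; exact: D2_ann. Qed.
Let hT2 : (spanM t2' <= annM (Kx k'))%MS.
Proof. by apply: spanM_sub => a /mapP[b bt ->]; apply: actD_ann; exact: ht2. Qed.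

Let ranks : [/\ \rank (spanM s2 :&: spanM t2') = 0, \rank (spanM s2) = size s2
              & \rank (spanM t2') = size t2']%N.
Proof.
apply: nat3; [exact: rank_spanM | exact: rank_spanM |].
by rewrite -size_cat -hrk spanM_cat mxrank_sum_cap.
Qed.

Let cap0 : (spanM s2 :&: spanM t2')%MS = 0.
Proof. by case: ranks => r0 _ _; apply/eqP; rewrite -mxrank_eq0 r0. Qed.

Let annS : (annM (Kx g) <= spanM s2)%MS.
Proof.
case: ranks => _ rS _; case: (mxrank_leqif_eq hS2) => _ e.
have : (spanM s2 == annM (Kx g))%MS.
  by rewrite -e rS sz2 rank_annM rank_Kx subKn // codim_le.
by case/andP.
Qed.

Let annT : (annM (Kx k') <= spanM t2')%MS.
Proof.
case: ranks => _ _ rT; case: (mxrank_leqif_eq hT2) => _ e.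
have : (spanM t2' == annM (Kx k'))%MS.
  by rewrite -e rT size_map szt rank_annM rank_Kx subKn ?codim_le // codim_conj.
by case/andP.
Qed.

Lemma gh_eq : (g * h = k' * g)%g.
Proof. by rewrite /k' -!mulgA mulVg mulg1. Qed.

Lemma LA_fix v : fixV (g * h)%g v -> fixV g v /\ fixV k' v.
Proof.
move=> fv.
have e1 : actV g v = actV k'^-1 v.
  by rewrite -{2}fv gh_eq actVM actVK.
set w := actV g v - v.
set psi : V := (H *m (map_mx Num.conj w)^T)^T.
have hp : forall u, inner u w = pairing psi u.
  by move=> u; rewrite innerE pairingC trmxK.
have pg : (psi <= annM (Kx g))%MS.
  apply/annMP => u /fixV_K fu; rewrite -hp /w innerBr -{1}fu H_inv subrr //.
have pk : (psi <= annM (Kx k'))%MS.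
  apply/annMP => u /fixV_K fu; rewrite -hp /w innerBr e1.
  by rewrite -{1}(fixVK_inv fu) H_inv subrr.
have : (psi <= spanM s2 :&: spanM t2')%MS.
  by rewrite sub_capmx (submx_trans pg annS) (submx_trans pk annT).
rewrite cap0 submx0 => /eqP p0.
have w0 : w = 0 by apply: inner_eq0; rewrite hp p0 pairing0.
have fg : fixV g v by apply/eqP; rewrite -subr_eq0 -/w w0.
split=> //.
by rewrite /Defs.fixV -{1}fg -actVM -gh_eq.
Qed.

Lemma LA_fixK : forall v : V, (v <= Kx (g * h)%g)%MS -> (v <= Kx g)%MS /\ (v <= Kx k')%MS.
Proof.
move=> v /fixV_K /LA_fix [a b]; split; exact/fixV_K.
Qed.

Lemma LA_subann : (spanM (s2 ++ t2') <= annM (Kx (g * h)%g))%MS.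
Proof.
rewrite spanM_cat addsmx_sub; apply/andP; split.
  apply: submx_trans hS2 _; apply: annM_anti => v /LA_fixK []; done.
apply: submx_trans hT2 _; apply: annM_anti => v /LA_fixK []; done.
Qed.

Lemma LA_codim : codim (g * h)%g = (codim g + codim h)%N.
Proof.
apply/eqP; rewrite eqn_leq; apply/andP; split.
  rewrite codimE gh_eq rGM.
  have -> : rG k' *m rG g - 1%:M = rG k' *m (rG g - 1%:M) + (rG k' - 1%:M).
    by rewrite mulmxBr mulmx1 addrA subrK.
  apply: leq_trans (mxrank_add _ _) _; rewrite -(codim_conj g h) addnC -codimE.
  by rewrite addnC leq_add // codimE mxrankM_maxr.
have := mxrankS LA_subann; rewrite hrk size_cat size_map sz2 szt rank_annM rank_Kx.
by rewrite subKn // codim_le.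
Qed.

Lemma perp_anti (W1 W2 : V -> Prop) :
  (forall v, W1 v -> W2 v) -> forall v, perp W2 v -> perp W1 v.
Proof. by move=> hW v p w /hW; apply: p. Qed.

Lemma LA_D2 : forall a, a \in s2 ++ t2' -> D2 (g * h)%g a.
Proof.
move=> a; rewrite mem_cat => /orP[/hs2 ha|/mapP[b bt ->]] v pv.
  apply: ha; apply: perp_anti pv; apply: perp_anti => u /LA_fix []; done.
rewrite pairing_actD; apply: (ht2 bt) => w pw.
rewrite -(H_inv g) actKV; apply: pv => u fu.
rewrite -(H_inv g^-1) actVK; apply: pw; apply: fix_conj; case: (LA_fix fu) => _; done.
Qed.

Lemma LA_D1 : forall phi : V, exists psi : V,
  (psi <= spanM (s2 ++ t2'))%MS /\ D1 (g * h)%g (phi - psi).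
Proof.
move=> phi; set k := (g * h)%g; set P := perpM (Kx k).
have rP : \rank P = codim k by rewrite rank_perpM rank_Kx subKn // codim_le.
have capKP : (Kx k :&: P)%MS = 0.
  apply: mx_eq0_sub => v; rewrite sub_capmx => /andP[vK /perpMP vP].
  by apply: inner_eq0; apply: vP.
have rKP : \rank (Kx k + P)%MS = n.
  have := mxrank_sum_cap (Kx k) P; rewrite capKP mxrank0 addn0 rP rank_Kx subnK //.
  exact: codim_le.
have ann0 : annM (Kx k + P)%MS = 0.
  by apply/eqP; rewrite -mxrank_eq0 rank_annM rKP subnn.
have capA : (annM (Kx k) :&: annM P)%MS = 0.
  apply: mx_eq0_sub => chi; rewrite sub_capmx => /andP[/annMP h1 /annMP h2].
  have : (chi <= annM (Kx k + P)%MS)%MS.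
    apply/annMP => v /sub_addsmxP[[u1 u2] /= ->].
    by rewrite pairingDr h1 ?h2 ?addr0 ?submxMl.
  by rewrite ann0 submx0 => /eqP.
have rA : \rank (annM (Kx k) + annM P)%MS = n.
  have e := mxrank_sum_cap (annM (Kx k)) (annM P).
  by rewrite capA mxrank0 addn0 !rank_annM rP rank_Kx subKn ?codim_le // subnKC ?codim_le in e.
have : (phi <= annM (Kx k) + annM P)%MS by apply: submx_full; rewrite /row_full rA.
case/sub_addsmxP => -[u1 u2] /= ephi.
have annL : (annM (Kx k) <= spanM (s2 ++ t2'))%MS.
  case: (mxrank_leqif_eq LA_subann) => _ e.
  have : (spanM (s2 ++ t2') == annM (Kx k))%MS.
    by rewrite -e hrk size_cat size_map sz2 szt rank_annM rank_Kx subKn ?codim_le // LA_codim.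
  by case/andP.
exists (u1 *m annM (Kx k)); split; first by apply: submx_trans annL; exact: submxMl.
rewrite ephi addrC addKr => v pv.
have vP : (v <= P)%MS by apply/perpMP => w /fixV_K fw; apply: pv.
by move: v vP {pv}; apply/annMP; exact: submxMl.
Qed.

End Main.

End LA.


Section G.
Variables (C : numClosedFieldType) (n : nat) (gT : finGroupType).
Variable rG : mx_representation C [set: gT]%G n.
Variable H : 'M[C]_n.
Hypothesis H_herm : forall i j, H j i = (H i j)^*.
Hypothesis H_posdef : forall v : 'rV[C]_n, v != 0 -> 0 < inner H v v.
Hypothesis H_inv : forall (g : gT) (u v : 'rV[C]_n),
        inner H (actV rG g u) (actV rG g v) = inner H u v.
Local Notation V := 'rV[C]_n.
Local Notation ext := (ext C n).
Local Notation actV := (actV rG).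
Local Notation actD := (actD rG).
Local Notation actE := (actE rG).
Local Notation inner := (inner H).
Local Notation fixV := (fixV rG).
Local Notation perp := (perp H).
Local Notation codim := (codim rG).
Local Notation pairing := (@pairing C n).
Local Notation polyS := (@polyS C n).
Local Notation idealS := (@idealS C n).
Local Notation wedge := (@wedge C n).
Local Notation wedgeL := (@wedgeL C n).
Local Notation D1 x := (dualSub H (fixV x)).
Local Notation D2 x := (dualSub H (perp (fixV x))).
Local Notation spanM := (@spanM C n).

Lemma polyS_comp g f : polyS f -> polyS (fun phi => f (actD g phi)).
Proof.
elim=> [c|v|f1 f2 _ IH1 _ IH2|f1 f2 _ IH1 _ IH2].
- exact: polyS_const.
- have -> : (fun phi => pairing (actD g phi) v) = (fun phi => pairing phi (actV g^-1 v)).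
    by apply: functional_extensionality => phi; rewrite pairing_actD.
  exact: polyS_lin.
- exact: polyS_add.
- exact: polyS_mul.
Qed.

Lemma polyS_scale f c : polyS f -> polyS (fun phi => f phi * c).
Proof. by move=> hf; apply: polyS_mul hf (polyS_const _ _). Qed.

Lemma polyS_sum I (r : seq I) (F : I -> V -> C) :
  (forall i, polyS (F i)) -> polyS (fun phi => \sum_(i <- r) F i phi).
Proof.
move=> hF; elim: r => [|a r IH].
  have -> : (fun phi : V => \sum_(i <- [::]) F i phi) = (fun _ => 0).
    by apply: functional_extensionality => phi; rewrite big_nil.
  exact: polyS_const.
have -> : (fun phi : V => \sum_(i <- a :: r) F i phi) =
          (fun phi => F a phi + \sum_(i <- r) F i phi).
  by apply: functional_extensionality => phi; rewrite big_cons.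
exact: polyS_add.
Qed.

Lemma ideal_poly W f : idealS W f -> polyS f.
Proof.
case=> m [h [w [hh [hw ->]]]]; apply: polyS_sum => i.
by apply: polyS_mul => //; apply: polyS_lin.
Qed.

Lemma ideal_mono (W1 W2 : V -> Prop) f :
  (forall v, W1 v -> W2 v) -> idealS W1 f -> idealS W2 f.
Proof.
move=> hW [m [h [w [hh [hw ->]]]]]; exists m, h, w; split=> //; split=> // i.
exact: hW.
Qed.

Lemma ideal_mulp W f p : idealS W f -> polyS p -> idealS W (fun phi => p phi * f phi).
Proof.
move=> [m [h [w [hh [hw ->]]]]] hp.
exists m, (fun i phi => p phi * h i phi), w; split; first by move=> i; exact: polyS_mul.
split=> //; apply: functional_extensionality => phi; rewrite mulr_sumr.
by apply: eq_bigr => i _; rewrite mulrA.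
Qed.

Lemma ideal_scale W f c : idealS W f -> idealS W (fun phi => f phi * c).
Proof.
move=> hf; have := ideal_mulp hf (polyS_const _ c).
have -> : (fun phi : V => c * f phi) = (fun phi => f phi * c).
  by apply: functional_extensionality => phi; rewrite mulrC.
done.
Qed.

Lemma perp_conj g h w : perp (fixV h) w -> perp (fixV (g * h * g^-1)%g) (actV g w).
Proof.
move=> pw u fu; rewrite -(H_inv g^-1) actVK; apply: pw; exact: fix_conj.
Qed.

Lemma ideal_comp g h f : idealS (perp (fixV h)) f ->
  idealS (perp (fixV (g * h * g^-1)%g)) (fun phi => f (actD g^-1 phi)).
Proof.
move=> [m [hh [w [hph [hw ->]]]]].
exists m, (fun i phi => hh i (actD g^-1 phi)), (fun i => actV g (w i)).
split; first by move=> i; exact: polyS_comp.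
split; first by move=> i; apply: perp_conj.
apply: functional_extensionality => phi; apply: eq_bigr => i _.
by rewrite pairing_actD invgK.
Qed.

Inductive SP (Q : ext -> Prop) : ext -> Prop :=
| SP0 : SP Q 0
| SPD x y : SP Q x -> SP Q y -> SP Q (x + y)
| SPZ c z : Q z -> SP Q (c *: z).

Lemma SP_gen (Q : ext -> Prop) z : Q z -> SP Q z.
Proof. by move=> hz; rewrite -(scale1r z); apply: SPZ. Qed.

Lemma SP_scale Q c x : SP Q x -> SP Q (c *: x).
Proof.
elim=> [|x1 y1 _ IH1 _ IH2|c' z hz].
- by rewrite scaler0; apply: SP0.
- by rewrite scalerDr; apply: SPD.
- by rewrite scalerA; apply: SPZ.
Qed.

Lemma SP_sum Q I (r : seq I) (F : I -> ext) :
  (forall i, SP Q (F i)) -> SP Q (\sum_(i <- r) F i).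
Proof.
move=> hF; elim: r => [|a r IH]; first by rewrite big_nil; apply: SP0.
by rewrite big_cons; apply: SPD.
Qed.

Lemma SP_lift (Q1 Q2 : ext -> Prop) x :
  (forall z, Q1 z -> SP Q2 z) -> SP Q1 x -> SP Q2 x.
Proof.
move=> hQ; elim=> [|x1 y1 _ IH1 _ IH2|c z hz].
- exact: SP0.
- exact: SPD.
- by apply: SP_scale; apply: hQ.
Qed.

Lemma SP_wedge (Q1 Q2 Q : ext -> Prop) a b :
  (forall z1 z2, Q1 z1 -> Q2 z2 -> SP Q (wedge z1 z2)) ->
  SP Q1 a -> SP Q2 b -> SP Q (wedge a b).
Proof.
move=> hQ ha hb; elim: ha => [|x1 y1 _ IH1 _ IH2|c z1 hz1].
- by rewrite wedge0l; apply: SP0.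
- by rewrite wedgeDl; apply: SPD.
elim: hb => [|x1 y1 _ IH1 _ IH2|c' z2 hz2].
- by rewrite wedge0r; apply: SP0.
- by rewrite wedgeDr; apply: SPD.
- by rewrite wedgeZr wedgeZl; do 2 apply: SP_scale; apply: hQ.
Qed.

Lemma ffun_sumZ m (c : 'I_m -> C) (y : 'I_m -> ext) :
  [ffun K => \sum_(i < m) c i * y i K] = \sum_(i < m) c i *: y i.
Proof.
apply/ffunP => K; rewrite ffunE extsumE; apply: eq_bigr => i _.
by rewrite extZE.
Qed.

Lemma ext_span_SP Q x : ext_span Q x -> SP Q x.
Proof.
case=> m [c [y [hy ->]]]; rewrite ffun_sumZ; apply: SP_sum => i.
by apply: SP_scale; apply: SP_gen.
Qed.

Lemma ext_span_gen (Q : ext -> Prop) z : Q z -> ext_span Q z.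
Proof.
move=> hz; exists 1%N, (fun _ => 1), (fun _ => z); split=> //.
by rewrite ffun_sumZ big_ord1 scale1r.
Qed.

Definition Gen (g : gT) (p : nat) (z : ext) : Prop :=
  exists s1 s2 : seq V, (codim g <= p)%N /\ size s1 = (p - codim g)%N /\
    size s2 = codim g /\ (forall a, a \in s1 -> D1 g a) /\
    (forall a, a \in s2 -> D2 g a) /\ z = wedgeL (s1 ++ s2).

Lemma Xg_SP g p x : Xg rG H g p x -> SP (Gen g p) x.
Proof.
rewrite /Xg; case: ifP => hc; last by move->; apply: SP0.
move=> /ext_span_SP; apply: SP_lift => z [a [b [ha [hb ->]]]].
apply: (SP_wedge _ (ext_span_SP ha) (ext_span_SP hb)).
move=> z1 z2 [s1 [sz1 [h1 ->]]] [s2 [sz2 [h2 ->]]].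
apply: SP_gen; exists s1, s2; do !split=> //; by rewrite wedgeL_cat.
Qed.

Lemma Gen_Xg g p z : Gen g p z -> Xg rG H g p z.
Proof.
move=> [s1 [s2 [hc [sz1 [sz2 [h1 [h2 ->]]]]]]]; rewrite /Xg hc.
apply: ext_span_gen; exists (wedgeL s1), (wedgeL s2); split.
  by apply: ext_span_gen; exists s1.
split; last by rewrite wedgeL_cat.
by apply: ext_span_gen; exists s2.
Qed.

Inductive TT (P : (V -> C) -> Prop) (G : ext -> Prop) : (V -> ext) -> Prop :=
| TT0 : TT P G (fun _ => 0)
| TTD F1 F2 : TT P G F1 -> TT P G F2 -> TT P G (fun phi => F1 phi + F2 phi)
| TTZ f z : P f -> G z -> TT P G (fun phi => f phi *: z).

Lemma TT_sum P G I (r : seq I) (F : I -> V -> ext) :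
  (forall i, TT P G (F i)) -> TT P G (fun phi => \sum_(i <- r) F i phi).
Proof.
move=> hF; elim: r => [|a r IH].
  have -> : (fun phi : V => \sum_(i <- [::]) F i phi) = (fun _ => 0).
    by apply: functional_extensionality => phi; rewrite big_nil.
  exact: TT0.
have -> : (fun phi : V => \sum_(i <- a :: r) F i phi) =
          (fun phi => F a phi + \sum_(i <- r) F i phi).
  by apply: functional_extensionality => phi; rewrite big_cons.
exact: TTD.
Qed.

Lemma TT_SP (P : (V -> C) -> Prop) G f w :
  (forall f c, P f -> P (fun phi => f phi * c)) ->
  P f -> SP G w -> TT P G (fun phi => f phi *: w).
Proof.
move=> Ps hf; elim=> [|x y _ IH1 _ IH2|c z hz].
- have -> : (fun phi : V => f phi *: (0 : ext)) = (fun _ => 0).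
    by apply: functional_extensionality => phi; rewrite scaler0.
  exact: TT0.
- have -> : (fun phi : V => f phi *: (x + y)) = (fun phi => f phi *: x + f phi *: y).
    by apply: functional_extensionality => phi; rewrite scalerDr.
  exact: TTD.
- have -> : (fun phi : V => f phi *: (c *: z)) = (fun phi => (f phi * c) *: z).
    by apply: functional_extensionality => phi; rewrite scalerA.
  by apply: TTZ => //; apply: Ps.
Qed.

Lemma TT_monoP (P1 P2 : (V -> C) -> Prop) G F :
  (forall f, P1 f -> P2 f) -> TT P1 G F -> TT P2 G F.
Proof.
move=> hP; elim=> [|F1 F2 _ IH1 _ IH2|f z hf hz].
- exact: TT0.
- exact: TTD.
- by apply: TTZ => //; apply: hP.
Qed.

Lemma TT_zero P (G : ext -> Prop) F : (forall z, G z -> z = 0) -> TT P G F ->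
  F = (fun _ => 0).
Proof.
move=> hG; elim=> [//|F1 F2 _ -> _ ->|f z _ /hG ->].
  by apply: functional_extensionality => phi; rewrite addr0.
by apply: functional_extensionality => phi; rewrite scaler0.
Qed.

Lemma tensor_TT (P : (V -> C) -> Prop) g p F :
  (forall f c, P f -> P (fun phi => f phi * c)) ->
  tensorS P (Xg rG H g p) F -> TT P (Gen g p) F.
Proof.
move=> Ps [m [f [x [hf [hx ->]]]]].
have -> : (fun phi => [ffun K => \sum_(i < m) f i phi * x i K]) =
          (fun phi => \sum_(i < m) f i phi *: x i).
  by apply: functional_extensionality => phi; rewrite ffun_sumZ.
apply: TT_sum => i; apply: TT_SP => //; exact: Xg_SP.
Qed.

Lemma tensorS_add P (X : ext -> Prop) F1 F2 :
  tensorS P X F1 -> tensorS P X F2 -> tensorS P X (fun phi => F1 phi + F2 phi).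
Proof.
move=> [m1 [f1 [x1 [hf1 [hx1 ->]]]]] [m2 [f2 [x2 [hf2 [hx2 ->]]]]].
exists (m1 + m2)%N, (fun i => match split i with inl a => f1 a | inr b => f2 b end),
  (fun i => match split i with inl a => x1 a | inr b => x2 b end).
split; first by move=> i; case: (split i).
split; first by move=> i; case: (split i).
apply: functional_extensionality => phi; apply/ffunP => K.
rewrite extDE !ffunE big_split_ord /=; congr (_ + _); apply: eq_bigr => i _.
  by rewrite -[lshift _ _]/(unsplit (inl i)) unsplitK.
by rewrite -[rshift _ _]/(unsplit (inr i)) unsplitK.
Qed.

Lemma TT_tensor (P : (V -> C) -> Prop) g p F :
  TT P (Gen g p) F -> tensorS P (Xg rG H g p) F.
Proof.
elim=> [|F1 F2 _ IH1 _ IH2|f z hf hz].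
- exists 0%N, (fun _ _ => 0), (fun _ => 0); split; first by case.
  split; first by case.
  by apply: functional_extensionality => phi; apply/ffunP => K; rewrite !ffunE big_ord0.
- exact: tensorS_add.
- exists 1%N, (fun _ => f), (fun _ => z); split=> //; split; first by move=> _; exact: Gen_Xg.
  apply: functional_extensionality => phi.
  by rewrite ffun_sumZ big_ord1.
Qed.

End G.


Section G2.
Variables (C : numClosedFieldType) (n : nat) (gT : finGroupType).
Variable rG : mx_representation C [set: gT]%G n.
Variable H : 'M[C]_n.
Hypothesis H_herm : forall i j, H j i = (H i j)^*.
Hypothesis H_posdef : forall v : 'rV[C]_n, v != 0 -> 0 < inner H v v.
Hypothesis H_inv : forall (g : gT) (u v : 'rV[C]_n),
        inner H (actV rG g u) (actV rG g v) = inner H u v.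
Local Notation V := 'rV[C]_n.
Local Notation ext := (ext C n).
Local Notation actV := (actV rG).
Local Notation actD := (actD rG).
Local Notation actE := (actE rG).
Local Notation inner := (inner H).
Local Notation fixV := (fixV rG).
Local Notation perp := (perp H).
Local Notation codim := (codim rG).
Local Notation pairing := (@pairing C n).
Local Notation polyS := (@polyS C n).
Local Notation idealS := (@idealS C n).
Local Notation wedge := (@wedge C n).
Local Notation wedgeL := (@wedgeL C n).
Local Notation D1 x := (dualSub H (fixV x)).
Local Notation D2 x := (dualSub H (perp (fixV x))).
Local Notation spanM := (@spanM C n).
Local Notation Gen := (Gen rG H).

Lemma wedgeL_blocks (A B C' D : seq V) :
  wedgeL ((A ++ B) ++ (C' ++ D)) =
  (-1) ^+ (size B * size C') *: wedgeL ((A ++ C') ++ (B ++ D)).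
Proof.
rewrite !wedgeL_cat !wedge_assoc -[wedge (wedgeL B) (wedge _ _)]wedge_assoc.
by rewrite wedgeL_swap wedgeZl wedgeZr wedge_assoc.
Qed.

Lemma natsz p q a b : (a <= p)%N -> (b <= q)%N -> ((p - a) + (q - b) = (p + q) - (a + b))%N.
Proof. move=> /ssrnat.leP h1 /ssrnat.leP h2; rewrite -!plusE -!minusE; lia. Qed.

Lemma GL g h p q z1 z2 : Gen g p z1 -> Gen h q z2 ->
  wedge z1 (actE g z2) = 0 \/
  ((forall v, fixV (g * h)%g v -> fixV g v /\ fixV (g * h * g^-1)%g v) /\
   SP (Gen (g * h)%g (p + q)) (wedge z1 (actE g z2))).
Proof.
move=> [s1 [s2 [cg [sz1 [sz2 [h1 [h2 ->]]]]]]] [t1 [t2 [ch [tz1 [tz2 [k1 [k2 ->]]]]]]].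
rewrite actE_wedgeL map_cat -wedgeL_cat wedgeL_blocks.
set U := s1 ++ map (actD g) t1; set L := s2 ++ map (actD g) t2.
have : (\rank (spanM L) <= size L)%N by exact: rank_spanM.
rewrite leq_eqVlt => /orP[/eqP hrk|hr]; last first.
  by left; rewrite wedgeL_cat (wedgeL_dep hr) wedge0r scaler0.
right.
have hfix := LA_fix H_herm H_posdef H_inv sz2 tz2 h2 k2 hrk.
split=> //.
have hD1 := LA_D1 H_herm H_posdef H_inv sz2 tz2 h2 k2 hrk.
pose pr (phi : V) : V := proj1_sig (constructive_indefinite_description _ (hD1 phi)).
have hpr : forall phi, (pr phi <= spanM L)%MS /\ D1 (g * h)%g (phi - pr phi).
  by move=> phi; rewrite /pr; case: (constructive_indefinite_description _ _).
rewrite -(@wedgeL_repl C n (fun phi => phi - pr phi)); last first.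
  move=> a _; rewrite addrC addKr -scaleN1r; apply: scalemx_sub; exact: (hpr a).1.
apply: SPZ; exists (map (fun phi => phi - pr phi) U), L.
have cod := LA_codim H_herm H_posdef H_inv sz2 tz2 h2 k2 hrk.
split; first by rewrite cod leq_add.
split; first by rewrite size_map size_cat size_map sz1 tz1 cod natsz.
split; first by rewrite size_cat size_map sz2 tz2 cod.
split; first by move=> a /mapP[b _ ->]; exact: (hpr b).2.
split=> //; exact: (LA_D2 H_herm H_posdef H_inv sz2 tz2 h2 k2 hrk).
Qed.

Lemma TT_prod (P1 P2 PO : (V -> C) -> Prop) g h p q F1 F2 :
  (forall f c, PO f -> PO (fun phi => f phi * c)) ->
  (forall f1 f2, P1 f1 -> P2 f2 ->
     (forall v, fixV (g * h)%g v -> fixV g v /\ fixV (g * h * g^-1)%g v) ->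
     PO (fun phi => f1 phi * f2 (actD g^-1 phi))) ->
  TT P1 (Gen g p) F1 -> TT P2 (Gen h q) F2 ->
  TT PO (Gen (g * h)%g (p + q)) (fun phi => wedge (F1 phi) (actE g (F2 (actD g^-1 phi)))).
Proof.
move=> Ps HP t1 t2; elim: t1 => [|A1 A2 _ IH1 _ IH2|f1 z1 hf1 hz1].
- have -> : (fun phi => wedge 0 (actE g (F2 (actD g^-1 phi)))) = (fun _ => 0).
    by apply: functional_extensionality => phi; rewrite wedge0l.
  exact: TT0.
- have -> : (fun phi => wedge (A1 phi + A2 phi) (actE g (F2 (actD g^-1 phi)))) =
    (fun phi => wedge (A1 phi) (actE g (F2 (actD g^-1 phi))) +
                wedge (A2 phi) (actE g (F2 (actD g^-1 phi)))).
    by apply: functional_extensionality => phi; rewrite wedgeDl.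
  exact: TTD.
elim: t2 => [|B1 B2 _ IH1 _ IH2|f2 z2 hf2 hz2].
- have -> : (fun phi => wedge (f1 phi *: z1) (actE g 0)) = (fun _ => 0).
    by apply: functional_extensionality => phi; rewrite actE0 wedge0r.
  exact: TT0.
- have -> : (fun phi => wedge (f1 phi *: z1) (actE g (B1 (actD g^-1 phi) + B2 (actD g^-1 phi)))) =
    (fun phi => wedge (f1 phi *: z1) (actE g (B1 (actD g^-1 phi))) +
                wedge (f1 phi *: z1) (actE g (B2 (actD g^-1 phi)))).
    by apply: functional_extensionality => phi; rewrite actED wedgeDr.
  exact: TTD.
have -> : (fun phi => wedge (f1 phi *: z1) (actE g (f2 (actD g^-1 phi) *: z2))) =
  (fun phi => (f1 phi * f2 (actD g^-1 phi)) *: wedge z1 (actE g z2)).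
  by apply: functional_extensionality => phi; rewrite actEZ wedgeZl wedgeZr scalerA.
case: (GL hz1 hz2) => [->|[hfix hs]].
  have -> : (fun phi => (f1 phi * f2 (actD g^-1 phi)) *: (0 : ext)) = (fun _ => 0).
    by apply: functional_extensionality => phi; rewrite scaler0.
  exact: TT0.
by apply: TT_SP => //; apply: HP.
Qed.

Definition inX (P : gT -> (V -> C) -> Prop) (a : elt C n gT) :=
  exists b : 'I_n.+1 -> elt C n gT,
    (forall (p : 'I_n.+1) g, tensorS (P g) (Xg rG H g p) (b p g)) /\
    a = (fun g phi => [ffun K => \sum_(p < n.+1) b p g phi K]).

Lemma Gen_big k d z : Gen k d z -> (n < d)%N -> z = 0.
Proof.
move=> [s1 [s2 [hc [sz1 [sz2 [_ [_ ->]]]]]]] hd; apply: wedgeL_dep.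
rewrite size_cat sz1 sz2 subnK //; apply: leq_ltn_trans hd; exact: rank_leq_col.
Qed.

Lemma smashE (a b : elt C n gT) k phi :
  smash rG a b k phi = \sum_g wedge (a g phi) (actE g (b (g^-1 * k)%g (actD g^-1 phi))).
Proof. by apply/ffunP => K; rewrite ffunE extsumE. Qed.

Lemma sum_pick (m : nat) (Y : ext) : ((n < m)%N -> Y = 0) ->
  \sum_(r < n.+1) (if m == r then Y else 0) = Y.
Proof.
move=> hY; case: (ltnP n m) => hm.
  by rewrite hY //; apply: big1 => r _; case: (m == r).
have hm' : (m < n.+1)%N by [].
rewrite (bigD1 (Ordinal hm')) //= eqxx big1 ?addr0 // => r nr.
case: eqP => // e; move: nr; rewrite -(inj_eq val_inj) /= -e eqxx //.
Qed.

Lemma glue (PA PB PO : gT -> (V -> C) -> Prop) a b :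
  (forall g f c, PA g f -> PA g (fun phi => f phi * c)) ->
  (forall g f c, PB g f -> PB g (fun phi => f phi * c)) ->
  (forall g h p q F1 F2, TT (PA g) (Gen g p) F1 -> TT (PB h) (Gen h q) F2 ->
     TT (PO (g * h)%g) (Gen (g * h)%g (p + q))
        (fun phi => wedge (F1 phi) (actE g (F2 (actD g^-1 phi))))) ->
  inX PA a -> inX PB b -> inX PO (smash rG a b).
Proof.
move=> PAs PBs hprod [ba [hba ->]] [bb [hbb ->]].
pose X (p q : 'I_n.+1) := smash rG (ba p) (bb q).
have TX : forall (p q : 'I_n.+1) k, TT (PO k) (Gen k (p + q)) (X p q k).
  move=> p q k.
  have -> : X p q k = (fun phi => \sum_g
      wedge (ba p g phi) (actE g (bb q (g^-1 * k)%g (actD g^-1 phi)))).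
    by apply: functional_extensionality => phi; rewrite /X smashE.
  apply: TT_sum => g.
  have := hprod g (g^-1 * k)%g p q _ _ (tensor_TT (PAs g) (hba p g))
     (tensor_TT (PBs _) (hbb q (g^-1 * k)%g)).
  by rewrite mulKVg.
exists (fun (r : 'I_n.+1) k phi =>
  \sum_(p < n.+1) \sum_(q < n.+1) (if (p + q == r)%N then X p q k phi else 0)).
split.
  move=> r k; apply: TT_tensor; cbv beta.
  apply: TT_sum => p.
  apply: TT_sum => q.
  case: eqP => [<-|_]; first exact: TX.
  exact: TT0.
apply: functional_extensionality => k; apply: functional_extensionality => phi.
transitivity (\sum_(p < n.+1) \sum_(q < n.+1) X p q k phi).
  rewrite smashE; under eq_bigr => g _ do rewrite -!sum_ffun actE_sum wedge_sum2.
  rewrite exchange_big; apply: eq_bigr => p _; rewrite exchange_big; apply: eq_bigr => q _.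
  by rewrite /X smashE.
rewrite -sum_ffun [RHS]exchange_big; apply: eq_bigr => p _.
rewrite [RHS]exchange_big; apply: eq_bigr => q _.
rewrite sum_pick // => hbig.
by rewrite (TT_zero (fun z hz => Gen_big hz hbig) (TX p q k)).
Qed.


Lemma ideal_mulpr W f p : idealS W f -> polyS p -> idealS W (fun phi => f phi * p phi).
Proof.
move=> hf hp; have := ideal_mulp hf hp.
have -> : (fun phi : V => p phi * f phi) = (fun phi => f phi * p phi).
  by apply: functional_extensionality => phi; rewrite mulrC.
done.
Qed.

Lemma partZ a b : inZ rG H a -> inZ rG H b -> inZ rG H (smash rG a b).
Proof.
move=> ha hb.
apply: (@glue (fun _ => polyS) (fun _ => polyS) (fun _ => polyS) a b) => //.
- by move=> g f c hf; apply: polyS_scale.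
- by move=> g f c hf; apply: polyS_scale.
move=> g h p q F1 F2 t1 t2; apply: TT_prod t1 t2.
  by move=> f c hf; apply: polyS_scale.
by move=> f1 f2 h1 h2 _; exact: (polyS_mul h1 (polyS_comp rG g^-1 h2)).
Qed.

Lemma partB b : inB rG H b -> inZ rG H b.
Proof.
move=> [bb [hb ->]]; exists bb; split=> // p g.
case: (hb p g) => m [f [x [hf [hx e]]]]; exists m, f, x; split=> //.
by move=> i; apply: ideal_poly (hf i).
Qed.

Lemma partZB a b : inZ rG H a -> inB rG H b ->
  inB rG H (smash rG a b) /\ inB rG H (smash rG b a).
Proof.
move=> ha hb; split.
  apply: (@glue (fun _ => polyS) (fun g => idealS (perp (fixV g)))
                (fun g => idealS (perp (fixV g))) a b) => //.
  - by move=> g f c hf; apply: polyS_scale.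
  - by move=> g f c hf; apply: ideal_scale.
  move=> g h p q F1 F2 t1 t2; apply: TT_prod t1 t2.
    by move=> f c hf; apply: ideal_scale.
  move=> f1 f2 h1 h2 hfix; apply: ideal_mulp h1.
  apply: ideal_mono (ideal_comp H_inv g h2); apply: perp_anti => u fu.
  by case: (hfix u fu).
apply: (@glue (fun g => idealS (perp (fixV g))) (fun _ => polyS)
              (fun g => idealS (perp (fixV g))) b a) => //.
- by move=> g f c hf; apply: ideal_scale.
- by move=> g f c hf; apply: polyS_scale.
move=> g h p q F1 F2 t1 t2; apply: TT_prod t1 t2.
  by move=> f c hf; apply: ideal_scale.
move=> f1 f2 h1 h2 hfix; apply: ideal_mulpr (polyS_comp rG g^-1 h2).
apply: ideal_mono h1; apply: perp_anti => u fu.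
by case: (hfix u fu).
Qed.

End G2.

Theorem proposition6p1 (C : numClosedFieldType) (n : nat) (gT : finGroupType)
    (rG : mx_representation C [set: gT]%G n) (H : 'M[C]_n)
    (H_herm : forall i j, H j i = (H i j)^*)
    (H_posdef : forall v : 'rV[C]_n, v != 0 -> 0 < inner H v v)
    (H_inv : forall (g : gT) (u v : 'rV[C]_n),
        inner H (actV rG g u) (actV rG g v) = inner H u v) :
  (forall a b : elt C n gT, inZ rG H a -> inZ rG H b -> inZ rG H (smash rG a b)) /\
  (forall b : elt C n gT, inB rG H b -> inZ rG H b) /\
  (forall a b : elt C n gT, inZ rG H a -> inB rG H b ->
      inB rG H (smash rG a b) /\ inB rG H (smash rG b a)).
Proof.
split; [|split].
- by move=> a b; apply: (partZ H_herm H_posdef H_inv).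
- by move=> b; apply: partB.
- by move=> a b; apply: (partZB H_herm H_posdef H_inv).
Qed.
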